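(* Let $\mathcal{K}=\{1,\dots,K\}$ and $\mathcal{N}=\{1,\dots,N\}$, and let all constants be as described in the context. For each $k\in\mathcal{K}$ let $k'\in\arg\max_{n\in\mathcal{N}} g_{k,n}$. Consider problem (P1): maximize over $\{p_n\},\{p_{k,n}\},\{b_{k,n}\},\{x_k\},\{q_k\},\{w_k\}$ the ratio $$\frac{\sum_{n=1}^N \rho(B^n_{SC},p_n,g_n)+\sum_{k=1}^K\sum_{n=1}^N x_k\,\rho(b_{k,n},p_{k,n},g_{k,n})}{\sum_{n=1}^N \frac{p_n}{\xi}+\sum_{n=1}^N\sum_{k=1}^K x_k\frac{p_{k,n}}{\xi}+\sum_{k=1}^K x_k\frac{q_k}{\xi}+P_{\rm c}}$$ subject to C1: $\sum_{n} p_n+\sum_{n}\sum_{k} p_{k,n}+\sum_k q_k\le P^{SC}_{\max}$; C2: $\sum_{n} b_{k,n}+w_k\le x_k W^k_{MC}$ for all $k\in\mathcal{K}$; C3: $\rho(w_k,q_k,h_k)\ge x_k R^k_{MC}$ for all $k\in\mathcal{K}$; C4: $\sum_{n}\rho(B^n_{SC},p_n,g_n)+\sum_k\sum_n x_k\rho(b_{k,n},p_{k,n},g_{k,n})\ge R^{SC}_{\min}$; C5: $x_k\in\{0,1\}$ for all $k$; C6: $b_{k,n}\ge0$, $w_k\ge0$ for all $k,n$; C7: $p_n\ge0$, $p_{k,n}\ge0$, $q_k\ge0$ for all $k,n$. Consider problem (P2): maximize over $\{p_n\},\{p_{k,k'}\},\{b_{k,k'}\},\{x_k\},\{q_k\},\{w_k\}$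 the ratio $$\frac{\sum_{n=1}^N \rho(B^n_{SC},p_n,g_n)+\sum_{k=1}^K x_k\,\rho(b_{k,k'},p_{k,k'},g_{k,k'})}{\sum_{n=1}^N \frac{p_n}{\xi}+\sum_{k=1}^K x_k\frac{p_{k,k'}}{\xi}+\sum_{k=1}^K x_k\frac{q_k}{\xi}+P_{\rm c}}$$ subject to C1: $\sum_n p_n+\sum_k p_{k,k'}+\sum_k q_k\le P^{SC}_{\max}$; C2: $b_{k,k'}+w_k= x_kW^k_{MC}$ for all $k$; C3: $\rho(w_k,q_k,h_k)= x_kR^k_{MC}$ for all $k$; C4: $\sum_n\rho(B^n_{SC},p_n,g_n)+\sum_k x_k\rho(b_{k,k'},p_{k,k'},g_{k,k'})\ge R^{SC}_{\min}$; together with $x_k\in\{0,1\}$, $b_{k,k'}\ge0$, $w_k\ge0$, $p_n\ge0$, $p_{k,k'}\ge0$, $q_k\ge0$. Then the optimal solution of (P1) is equivalent to that of (P2): the optimal values of (P1) and (P2) coincide, and an optimal solution of (P2), extended by setting $b_{k,n}=0$ and $p_{k,n}=0$ for all $n\neq k'$, is an optimal solution of (P1). In particular, at an optimum of (P1) the bandwidth $W^k_{MC}$ of each MU $k$ is shared with at most one SU, namely SU $k'$.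
   Context: Setting: a small cell (SC) base station serves small-cell users (SUs) indexed by $\mathcal{N}=\{1,\dots,N\}$ and may additionally serve macro-cell users (MUs) indexed by $\mathcal{K}=\{1,\dots,K\}$. Given constants: noise spectral density $N_0>0$; power amplifier efficiency $\xi\in(0,1]$; circuit power $P_{\rm c}>0$; maximum transmit power $P^{SC}_{\max}>0$; minimum SC system rate $R^{SC}_{\min}\ge0$. For each MU $k$: licensed bandwidth $W^k_{MC}>0$, minimum rate $R^k_{MC}>0$, channel power gain $h_k>0$ from the SC to MU $k$, and channel power gains $g_{k,n}>0$ from the SC to SU $n$ on MU $k$'s bandwidth. For each SU $n$: licensed bandwidth $B^n_{SC}>0$ and channel power gain $g_n>0$ on it. For $b\ge0$, $p\ge0$, $g>0$ define the rate $\rho(b,p,g)=b\log_2\!\big(1+\frac{pg}{bN_0}\big)$, with $\rho(0,p,g)=0$. Variables: $x_k$ indicates whether MU $k$ is served; $w_k,q_k$ are the bandwidth and power used to serve MU $k$; $b_{k,n},p_{k,n}$ are the bandwidth taken from MU $k$'s band and power used for SU $n$; $p_n$ is the power for SU $n$ on its own band. *)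

(* Defs.v *)
From HB Require Import structures.
From mathcomp Require Import all_boot all_order all_algebra.
From mathcomp Require Import all_classical all_reals all_analysis.
Set Implicit Arguments. Unset Strict Implicit. Unset Printing Implicit Defensive.
Import Order.TTheory GRing.Theory Num.Theory.
Local Open Scope ring_scope.
Local Open Scope classical_set_scope.

Record params (R : realType) (N K : nat) := Params {
  N0   : R;
  xi   : R;
  Pc   : R;
  Pmax : R;
  Rmin : R;
  Wmc  : 'I_K -> R;
  Rmc  : 'I_K -> R;
  hk   : 'I_K -> R;
  gkn  : 'I_K -> 'I_N -> R;
  Bsc  : 'I_N -> R;
  gn   : 'I_N -> R
}.

Definition log2 (R : realType) (x : R) : R := ln x / ln 2.

Definition rho (R : realType) (N0 b p g : R) : R :=
  if b == 0 then 0 else b * log2 (1 + p * g / (b * N0)).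

Record var1 (R : realType) (N K : nat) := Var1 {
  p1   : 'I_N -> R;
  pkn1 : 'I_K -> 'I_N -> R;
  bkn1 : 'I_K -> 'I_N -> R;
  x1   : 'I_K -> bool;
  q1   : 'I_K -> R;
  w1   : 'I_K -> R
}.

(* Decision variables of (P2): only p_{k,k'} and b_{k,k'}. *)
Record var2 (R : realType) (K N : nat) := Var2 {
  p2  : 'I_N -> R;
  pk2 : 'I_K -> R;
  bk2 : 'I_K -> R;
  x2  : 'I_K -> bool;
  q2  : 'I_K -> R;
  w2  : 'I_K -> R
}.

Section Problems.
Variables (R : realType) (N K : nat) (P : params R N K).

Definition rate1 (v : var1 R N K) : R :=
  \sum_(n < N) rho (N0 P) (Bsc P n) (p1 v n) (gn P n)
  + \sum_(k < K) \sum_(n < N)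
      (x1 v k)%:R * rho (N0 P) (bkn1 v k n) (pkn1 v k n) (gkn P k n).

Definition power1 (v : var1 R N K) : R :=
  \sum_(n < N) p1 v n / xi P
  + \sum_(n < N) \sum_(k < K) (x1 v k)%:R * (pkn1 v k n / xi P)
  + \sum_(k < K) (x1 v k)%:R * (q1 v k / xi P)
  + Pc P.

Definition EE1 (v : var1 R N K) : R := rate1 v / power1 v.

Definition feasible1 (v : var1 R N K) : Prop :=
  (\sum_(n < N) p1 v n + \sum_(n < N) \sum_(k < K) pkn1 v k n
        + \sum_(k < K) q1 v k <= Pmax P) /\
  (forall k, \sum_(n < N) bkn1 v k n + w1 v k <= (x1 v k)%:R * Wmc P k) /\
  (forall k, (x1 v k)%:R * Rmc P k <= rho (N0 P) (w1 v k) (q1 v k) (hk P k)) /\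
  (Rmin P <= rate1 v) /\
  (forall k n, 0 <= bkn1 v k n) /\ (forall k, 0 <= w1 v k) /\
  (forall n, 0 <= p1 v n) /\ (forall k n, 0 <= pkn1 v k n) /\
  (forall k, 0 <= q1 v k).
(* C5 (x_k in {0,1}) holds by the boolean encoding of x. *)

Definition optimal1 (v : var1 R N K) : Prop :=
  feasible1 v /\ forall v', feasible1 v' -> EE1 v' <= EE1 v.

Variable kp : 'I_K -> 'I_N.

Definition rate2 (v : var2 R K N) : R :=
  \sum_(n < N) rho (N0 P) (Bsc P n) (p2 v n) (gn P n)
  + \sum_(k < K) (x2 v k)%:R * rho (N0 P) (bk2 v k) (pk2 v k) (gkn P k (kp k)).

Definition power2 (v : var2 R K N) : R :=
  \sum_(n < N) p2 v n / xi P
  + \sum_(k < K) (x2 v k)%:R * (pk2 v k / xi P)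
  + \sum_(k < K) (x2 v k)%:R * (q2 v k / xi P)
  + Pc P.

Definition EE2 (v : var2 R K N) : R := rate2 v / power2 v.

Definition feasible2 (v : var2 R K N) : Prop :=
  (\sum_(n < N) p2 v n + \sum_(k < K) pk2 v k + \sum_(k < K) q2 v k <= Pmax P) /\
  (forall k, bk2 v k + w2 v k = (x2 v k)%:R * Wmc P k) /\
  (forall k, rho (N0 P) (w2 v k) (q2 v k) (hk P k) = (x2 v k)%:R * Rmc P k) /\
  (Rmin P <= rate2 v) /\
  (forall k, 0 <= bk2 v k) /\ (forall k, 0 <= w2 v k) /\
  (forall n, 0 <= p2 v n) /\ (forall k, 0 <= pk2 v k) /\ (forall k, 0 <= q2 v k).

Definition optimal2 (v : var2 R K N) : Prop :=
  feasible2 v /\ forall v', feasible2 v' -> EE2 v' <= EE2 v.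

Definition extend (v : var2 R K N) : var1 R N K :=
  Var1 (p2 v)
       (fun k n => if n == kp k then pk2 v k else 0)
       (fun k n => if n == kp k then bk2 v k else 0)
       (x2 v) (q2 v) (w2 v).

(* Optimal values, as suprema in the extended reals (-oo if infeasible). *)
Definition optval1 : \bar R := ereal_sup [set (EE1 v)%:E | v in feasible1].
Definition optval2 : \bar R := ereal_sup [set (EE2 v)%:E | v in feasible2].

End Problems.

(* Main.v *)
Require Import Defs.
From HB Require Import structures.
From mathcomp Require Import all_boot all_order all_algebra.
From mathcomp Require Import all_classical all_reals all_analysis.
From mathcomp Require Import ring lra.
Import Order.TTheory GRing.Theory Num.Theory.
Local Open Scope ring_scope.

Section RhoLemmas.
Variable R : realType.


Lemma ln_le_sub1 (x : R) : 0 < x -> ln x <= x - 1.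
Proof. move=> x0; have := expR_ge1Dx (ln x); rewrite lnK ?posrE //; lra. Qed.

Lemma ln2_gt0 : 0 < ln (2 : R).
Proof. apply: ln_gt0; lra. Qed.

Lemma rho0 (N0 p g : R) : rho N0 0 p g = 0.
Proof. by rewrite /rho eqxx. Qed.

Lemma rho_ge0 (N0 b p g : R) : 0 < N0 -> 0 <= b -> 0 <= p -> 0 <= g -> 0 <= rho N0 b p g.
Proof.
move=> n0 b0 p0 g0; rewrite /rho; case: ifP => // /negbT bn0.
have bp : 0 < b by rewrite lt_def bn0 b0.
rewrite /log2 mulr_ge0 // divr_ge0 ?(ltW ln2_gt0) // ln_ge0 // lerDl.
by rewrite divr_ge0 ?mulr_ge0 // ltW.
Qed.

Lemma rho_monop (N0 b p1 p2 g : R) : 0 < N0 -> 0 <= b -> 0 <= p1 -> p1 <= p2 -> 0 <= g ->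
  rho N0 b p1 g <= rho N0 b p2 g.
Proof.
move=> n0 b0 p0 p12 g0; rewrite /rho; case: ifP => // /negbT bn0.
have bp : 0 < b by rewrite lt_def bn0 b0.
rewrite /log2 ler_pM2l // ler_pM2r ?invr_gt0 ?ln2_gt0 //.
have h1 : 0 <= p1 * g / (b * N0) by rewrite divr_ge0 ?mulr_ge0 // ltW.
have h2 : p1 * g / (b * N0) <= p2 * g / (b * N0).
  by rewrite ler_pM2r ?invr_gt0 ?mulr_gt0 //; apply: ler_wpM2r.
rewrite ler_ln ?posrE; lra.
Qed.

Lemma rho_monog (N0 b p g G : R) : 0 < N0 -> 0 <= b -> 0 <= p -> 0 <= g -> g <= G ->
  rho N0 b p g <= rho N0 b p G.
Proof.
move=> n0 b0 p0 g0 gG; rewrite /rho; case: ifP => // /negbT bn0.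
have bp : 0 < b by rewrite lt_def bn0 b0.
rewrite /log2 ler_pM2l // ler_pM2r ?invr_gt0 ?ln2_gt0 //.
have h1 : 0 <= p * g / (b * N0) by rewrite divr_ge0 ?mulr_ge0 // ltW.
have h2 : p * g / (b * N0) <= p * G / (b * N0).
  by rewrite ler_pM2r ?invr_gt0 ?mulr_gt0 //; apply: ler_wpM2l.
rewrite ler_ln ?posrE; lra.
Qed.

Lemma rho_superadd (N0 b1 b2 p1 p2 G : R) : 0 < N0 -> 0 <= b1 -> 0 <= b2 ->
  0 <= p1 -> 0 <= p2 -> 0 <= G ->
  rho N0 b1 p1 G + rho N0 b2 p2 G <= rho N0 (b1 + b2) (p1 + p2) G.
Proof.
move=> n0 b10 b20 p10 p20 G0.
have [->|b1n0] := eqVneq b1 0.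
  by rewrite rho0 !add0r rho_monop // lerDr.
have [->|b2n0] := eqVneq b2 0.
  by rewrite rho0 !addr0 rho_monop // lerDl.
have b1p : 0 < b1 by rewrite lt_def b1n0 b10.
have b2p : 0 < b2 by rewrite lt_def b2n0 b20.
have bp : 0 < b1 + b2 by lra.
rewrite /rho (negbTE b1n0) (negbTE b2n0) gt_eqF // /log2.
set u1 := 1 + _; set u2 := 1 + _; set y := 1 + _.
have u1p : 0 < u1 by rewrite /u1 ltr_pwDl // divr_ge0 ?mulr_ge0 // ltW.
have u2p : 0 < u2 by rewrite /u2 ltr_pwDl // divr_ge0 ?mulr_ge0 // ltW.
have yp : 0 < y.
  rewrite /y ltr_pwDl // divr_ge0 // ?mulr_ge0 //; lra.

have key (u : R) : 0 < u -> ln u <= ln y + (u / y - 1).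
  move=> up; have -> : ln u = ln y + ln (u / y).
    by rewrite -lnM ?posrE ?divr_gt0 // mulrC divfK ?gt_eqF.
  have := ln_le_sub1 (u / y) (divr_gt0 up yp); lra.
have id : b1 * (u1 / y - 1) + b2 * (u2 / y - 1) = 0.
  rewrite /u1 /u2 /y; field.
  have h1 : 0 < (b1 + b2) * N0 by rewrite mulr_gt0.
  have h2 : 0 <= (p1 + p2) * G by rewrite mulr_ge0 // addr_ge0.
  rewrite b1n0 b2n0 !gt_eqF //; lra.
have k1 := ler_wpM2l (ltW b1p) (key _ u1p).
have k2 := ler_wpM2l (ltW b2p) (key _ u2p).
rewrite !mulrA -mulrDl ler_pM2r ?invr_gt0 ?ln2_gt0 //.
rewrite !mulrDr in k1 k2; rewrite mulrDl; nra.
Qed.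

Lemma rho_monob (N0 b B p G : R) : 0 < N0 -> 0 <= b -> b <= B -> 0 <= p -> 0 <= G ->
  rho N0 b p G <= rho N0 B p G.
Proof.
move=> n0 b0 bB p0 G0.
have h3 : 0 <= B - b by lra.
have := rho_superadd N0 b (B - b) p 0 G n0 b0 h3 p0 (lexx 0) G0.
rewrite addr0 (_ : b + (B - b) = B); last by ring.
have := rho_ge0 N0 (B - b) 0 G n0 h3 (lexx 0) G0; lra.
Qed.

Lemma rho_sum (I : Type) (r : seq I) (b p : I -> R) (N0 G : R) :
  0 < N0 -> 0 <= G -> (forall i, 0 <= b i) -> (forall i, 0 <= p i) ->
  \sum_(i <- r) rho N0 (b i) (p i) G <=
  rho N0 (\sum_(i <- r) b i) (\sum_(i <- r) p i) G.
Proof.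
move=> n0 G0 b0 p0; elim: r => [|i r IH]; first by rewrite !big_nil rho0.
rewrite !big_cons.
have sb : 0 <= \sum_(j <- r) b j by rewrite sumr_ge0.
have sp : 0 <= \sum_(j <- r) p j by rewrite sumr_ge0.
apply: le_trans (rho_superadd _ _ _ _ _ _ n0 (b0 i) sb (p0 i) sp G0).
by rewrite lerD2l.
Qed.

Lemma sum_if (n : nat) (F : 'I_n -> R) j :
  \sum_(i < n) (if i == j then F i else 0) = F j.
Proof. by rewrite -big_mkcond big_pred1_eq. Qed.

End RhoLemmas.
Lemma extend_ok (R : realType) (N K : nat) (P : params R N K)
  (kp : 'I_K -> 'I_N) (v : var2 R K N) :
  feasible2 P kp v -> feasible1 P (extend kp v) /\ EE1 P (extend kp v) = EE2 P kp v.
Proof.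
move=> [C1 [C2 [C3 [C4 [Hb [Hw [Hp [Hpk Hq]]]]]]]].
have Si (F : 'I_K -> R) k : \sum_(n < N) (if n == kp k then F k else 0) = F k.
  exact: (@sum_if R N (fun _ => F k) (kp k)).
have Er : rate1 P (extend kp v) = rate2 P kp v.
  rewrite /rate1 /rate2 /=; congr (_ + _); apply: eq_bigr => k _.
  rewrite -(Si (fun k => (x2 v k)%:R * rho (N0 P) (bk2 v k) (pk2 v k) (gkn P k (kp k))) k).
  by apply: eq_bigr => n _; case: eqP => [->|_]; rewrite ?rho0 ?mulr0.
have Ep : power1 P (extend kp v) = power2 P v.
  rewrite /power1 /power2 /=; congr (_ + _ + _ + _).
  rewrite exchange_big; apply: eq_bigr => k _.
  rewrite -(Si (fun k => (x2 v k)%:R * (pk2 v k / xi P)) k).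
  by apply: eq_bigr => n _; case: eqP => _; rewrite ?mul0r ?mulr0.
split; last by rewrite /EE1 /EE2 Er Ep.
rewrite /feasible1 /= Er; split.
  have -> : \sum_(n < N) \sum_(k < K) (if n == kp k then pk2 v k else 0)
     = \sum_(k < K) pk2 v k.
    by rewrite exchange_big; apply: eq_bigr => k _; exact: Si (pk2 v) k.
  by [].
split.
  by move=> k; rewrite (Si (bk2 v)) C2.
split; first by move=> k; rewrite C3.
split; first by [].
split; first by move=> k n; case: eqP.
split; first by [].
split; first by [].
split; last by [].
by move=> k n; case: eqP.
Qed.

Lemma ratio_le (R : realType) (r1 r2 P1 P2 : R) :
  0 <= r1 -> r1 <= r2 -> 0 < P2 -> P2 <= P1 -> r1 / P1 <= r2 / P2.
Proof.
move=> r10 r12 P20 P21.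
have P10 : 0 < P1 by apply: lt_le_trans P21.
apply: le_trans (_ : r1 / P2 <= _).
  by apply: ler_wpM2l => //; rewrite lef_pV2 ?posrE.
by apply: ler_wpM2r => //; rewrite invr_ge0 ltW.
Qed.

Lemma qs_props (R : realType) (N0 w q h Rm : R) :
  0 < N0 -> 0 < h -> 0 < Rm -> 0 <= w -> 0 <= q -> Rm <= rho N0 w q h ->
  let qs := (expR (Rm * ln 2 / w) - 1) * (w * N0 / h) in
  [/\ 0 < w, rho N0 w qs h = Rm, qs <= q & 0 <= qs].
Proof.
move=> n0 h0 R0 w0 q0 C qs.
have wp : 0 < w.
  rewrite lt_def w0 andbT; apply/negP => /eqP w00.
  by move: C; rewrite w00 rho0; lra.
have wn : w != 0 by rewrite gt_eqF.
have l2 := @ln2_gt0 R.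
have a0 : 0 <= Rm * ln 2 / w by rewrite divr_ge0 // mulr_ge0 // ltW.
have e1 := expR_ge1Dx (Rm * ln 2 / w).
have qs0 : 0 <= qs.
  rewrite /qs mulr_ge0 //; first lra.
  by rewrite divr_ge0 // ?mulr_ge0 // ltW.
split => //.
- rewrite /rho (negbTE wn) /log2.
  have -> : 1 + qs * h / (w * N0) = expR (Rm * ln 2 / w).
    rewrite /qs; field; rewrite wn !gt_eqF //.
  rewrite expRK; field; rewrite wn !gt_eqF //.
move: C; rewrite /rho (negbTE wn) /log2 => C.
set L := ln _ in C.
have h1 : Rm * ln 2 / w <= L.
  rewrite ler_pdivrMr //.
  have : Rm * ln 2 <= w * (L / ln 2) * ln 2 by rewrite ler_pM2r.
  have -> : w * (L / ln 2) * ln 2 = L * w by field; rewrite gt_eqF.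
  by [].
have arg0 : 0 < 1 + q * h / (w * N0).
  have : 0 <= q * h / (w * N0) by rewrite divr_ge0 ?mulr_ge0 // ltW.
  lra.
have h2 : expR (Rm * ln 2 / w) <= 1 + q * h / (w * N0).
  by rewrite -[X in _ <= X](@lnK R) ?posrE // ler_expR.
have h3 : 0 <= w * N0 / h by rewrite divr_ge0 ?mulr_ge0 // ltW.
rewrite /qs; apply: le_trans (_ : q * h / (w * N0) * (w * N0 / h) <= q).
  by apply: ler_wpM2r => //; lra.
have -> : q * h / (w * N0) * (w * N0 / h) = q by field; rewrite wn !gt_eqF.
by [].
Qed.

Lemma reduce_ok (R : realType) (N K : nat) (P : params R N K)
  (kp : 'I_K -> 'I_N) (v : var1 R N K) :
  0 < N0 P -> 0 < xi P -> 0 < Pc P ->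
  (forall k, 0 < Rmc P k) -> (forall k, 0 < hk P k) ->
  (forall k n, 0 < gkn P k n) -> (forall k n, gkn P k n <= gkn P k (kp k)) ->
  (forall n, 0 < Bsc P n) -> (forall n, 0 < gn P n) ->
  feasible1 P v -> exists u, feasible2 P kp u /\ EE1 P v <= EE2 P kp u.
Proof.
move=> hN0 hxi hPc hR hh hg hmax hB hgn [C1 [C2 [C3 [C4 [Hb [Hw [Hp [Hpk Hq]]]]]]]].
pose qs k := (expR (Rmc P k * ln 2 / w1 v k) - 1) * (w1 v k * N0 P / hk P k).
have QS k : x1 v k ->
    [/\ 0 < w1 v k, rho (N0 P) (w1 v k) (qs k) (hk P k) = Rmc P k,
        qs k <= q1 v k & 0 <= qs k].
  move=> xk; apply: qs_props => //; by move: (C3 k); rewrite xk mul1r.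
pose u := Var2 (p1 v) (fun k => if x1 v k then \sum_(n < N) pkn1 v k n else 0)
   (fun k => if x1 v k then Wmc P k - w1 v k else 0) (x1 v)
   (fun k => if x1 v k then qs k else 0) (fun k => if x1 v k then w1 v k else 0).
have sb k : 0 <= \sum_(n < N) bkn1 v k n by rewrite sumr_ge0.
have sp k : 0 <= \sum_(n < N) pkn1 v k n by rewrite sumr_ge0.
have Hrate : rate1 P v <= rate2 P kp u.
  rewrite /rate1 /rate2 /= lerD2l; apply: ler_sum => k _.
  case xk: (x1 v k); last by rewrite mul0r big1 // => n _; rewrite mul0r.
  rewrite mul1r; under eq_bigr do rewrite mul1r.
  have G0 : 0 <= gkn P k (kp k) by apply: ltW.
  apply: le_trans (_ : \sum_(n < N) rho (N0 P) (bkn1 v k n) (pkn1 v k n) (gkn P k (kp k)) <= _).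
    by apply: ler_sum => n _; apply: rho_monog => //; apply: ltW.
  apply: le_trans (@rho_sum R 'I_N (index_enum 'I_N) (bkn1 v k) (pkn1 v k) (N0 P) (gkn P k (kp k)) hN0 G0 (Hb k) (Hpk k)) _.
  apply: rho_monob => //.
  by move: (C2 k); rewrite xk mul1r; lra.
have rate0 : 0 <= rate1 P v.
  rewrite /rate1 addr_ge0 // sumr_ge0 // => [n _|k _].
    by apply: rho_ge0; [exact: hN0 | exact: ltW (hB n) | exact: Hp | exact: ltW (hgn n)].
  rewrite sumr_ge0 // => n _; rewrite mulr_ge0 //.
  by apply: rho_ge0; [exact: hN0 | exact: Hb | exact: Hpk | exact: ltW (hg k n)].
have Emid : \sum_(n < N) \sum_(k < K) (x1 v k)%:R * (pkn1 v k n / xi P)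
    = \sum_(k < K) (x1 v k)%:R * (pk2 u k / xi P).
  rewrite exchange_big; apply: eq_bigr => k _ /=.
  case: (x1 v k); last by rewrite mul0r big1 // => n _; rewrite mul0r.
  by rewrite mul1r mulr_suml; apply: eq_bigr => n _; rewrite mul1r.
have Eq : \sum_(k < K) (x1 v k)%:R * (q2 u k / xi P)
    <= \sum_(k < K) (x1 v k)%:R * (q1 v k / xi P).
  apply: ler_sum => k _ /=.
  case xk: (x1 v k); last by rewrite !mul0r.
  by rewrite !mul1r ler_pM2r ?invr_gt0 //; case: (QS k xk).
have pos1 : 0 <= \sum_(n < N) p1 v n / xi P.
  by rewrite sumr_ge0 // => n _; rewrite divr_ge0 // ltW.
have pos2 : 0 <= \sum_(k < K) (x1 v k)%:R * (pk2 u k / xi P).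
  rewrite sumr_ge0 // => k _ /=; case xk: (x1 v k); rewrite ?mul0r //.
  by rewrite mul1r divr_ge0 ?(ltW hxi) ?sp.
have pos3 : 0 <= \sum_(k < K) (x1 v k)%:R * (q2 u k / xi P).
  rewrite sumr_ge0 // => k _ /=; case xk: (x1 v k); rewrite ?mul0r //.
  by rewrite mul1r divr_ge0 ?(ltW hxi) //; case: (QS k xk).
have Hpow : power2 P u <= power1 P v.
  rewrite /power1 /power2 Emid /=; lra.
have Hpow0 : 0 < power2 P u by rewrite /power2 /=; lra.
exists u; split; last by apply: ratio_le.
split.
  have h1 : \sum_(k < K) pk2 u k <= \sum_(n < N) \sum_(k < K) pkn1 v k n.
    rewrite exchange_big; apply: ler_sum => k _ /=; case: (x1 v k) => //.
  have h2 : \sum_(k < K) q2 u k <= \sum_(k < K) q1 v k.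
    apply: ler_sum => k _ /=; case xk: (x1 v k); first by case: (QS k xk).
    exact: Hq.
  rewrite /=; lra.
split.
  by move=> k /=; case: (x1 v k); rewrite ?mul1r ?mul0r ?addr0 //; ring.
split.
  move=> k /=; case xk: (x1 v k); last by rewrite rho0 mul0r.
  by rewrite mul1r; case: (QS k xk).
split; first exact: le_trans C4 Hrate.
split.
  move=> k /=; case xk: (x1 v k) => //.
  by move: (C2 k) (sb k); rewrite xk mul1r; lra.
split; first by move=> k /=; case: (x1 v k).
split; first by [].
split; first by move=> k /=; case: (x1 v k).
move=> k /=; case xk: (x1 v k) => //; by case: (QS k xk).
Qed.

Theorem theorem1 (R : realType) (N K : nat) (P : params R N K)
    (kp : 'I_K -> 'I_N) :
  0 < N0 P -> 0 < xi P -> xi P <= 1 -> 0 < Pc P -> 0 < Pmax P ->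
  0 <= Rmin P ->
  (forall k, 0 < Wmc P k) -> (forall k, 0 < Rmc P k) ->
  (forall k, 0 < hk P k) -> (forall k n, 0 < gkn P k n) ->
  (forall n, 0 < Bsc P n) -> (forall n, 0 < gn P n) ->
  (* k' is a maximizer of g_{k,n} over n *)
  (forall k n, gkn P k n <= gkn P k (kp k)) ->
  optval1 P = optval2 P kp /\
  (forall v, optimal2 P kp v -> optimal1 P (extend kp v)).
Proof.
move=> hN0 hxi _ hPc _ _ _ hR hh hg hB hgn hmax.
have red v := @reduce_ok R N K P kp v hN0 hxi hPc hR hh hg hmax hB hgn.
split.
  apply/eqP; rewrite eq_le; apply/andP; split.
    apply: ge_ereal_sup => _ [v fv <-].
    have [u [fu le]] := red v fv.
    apply: le_trans (_ : ((EE2 P kp u)%:E <= _)%E); first by rewrite lee_fin.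
    by apply: ereal_sup_ubound; exists u.
  apply: ge_ereal_sup => _ [u fu <-].
  have [fe E] := @extend_ok R N K P kp u fu; rewrite -E.
  by apply: ereal_sup_ubound; exists (extend kp u).
move=> v [fv opt]; have [fe E] := @extend_ok R N K P kp v fv; split => // v' fv'.
rewrite E; have [u [fu le]] := red v' fv'; exact: le_trans le (opt u fu).
Qed.
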